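(* In the setting described in the context, let $T:\mathcal{H}\to\mathcal{H}$ be a bounded linear operator such that $\|T_{(z,w)}\|_{H_1\to H_1}\le L(z^{-1}w)$ for all $z,w\in G$, where $L:G\to[0,\infty)$ is measurable, $L(z^{-1})=L(z)$ for all $z$, and $L\in L^1(G,\omega(z)\,dz)$ for some continuous $\omega:G\to(0,\infty)$ satisfying $\omega(zw)\le\omega(z)\omega(w)$ for all $z,w\in G$. Then $T$ is partially localized.
   Context: Setting: $H_1,H_2$ are separable Hilbert spaces, $G$ is a separable locally compact group with left Haar measure $dz$. $\{E_N\}_{N\in\mathbb{N}}$ is a sequence of open precompact subsets of $G$ with $E_N\subseteq E_{N+1}$, $E_N^{-1}=E_N$, $E_NE_N\subseteq E_{2N}$, $\bigcup_NE_N=G$. $\{\psi_z\}_{z\in G}\subseteq H_2$ is a bounded, norm-continuous continuous Parseval frame: $\langle f,g\rangle_{H_2}=\int_G\langle f,\psi_z\rangle\langle\psi_z,g\rangle\,dz$. $\mathcal{H}=H_1\widehat\otimes H_2$. For $f\in\mathcal{H}$, $g\in H_2$, $\langle f,g\rangle_{H_2}\in H_1$ is the continuous extension of $\sum c_na_n\otimes b_n\mapsto\sum c_na_n\langle b_n,g\rangle_{H_2}$. $T_{(z,w)}h:=\langle T(h\otimes\psi_z),\psi_w\rangle_{H_2}$ for $h\in H_1$. Partially localized: $T$ is bounded on $\mathcal{H}$ and there is a continuous $\omega:G\to(0,\infty)$ with $\omega(zw)\le\omega(z)\omega(w)$ such that $\sup_z\omega(z)^{-1}\int_G\|T_{(z,w)}\|\omega(w)\,dw<\infty$,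 $\sup_w\omega(w)^{-1}\int_G\|T_{(z,w)}\|\omega(z)\,dz<\infty$, $\lim_{N\to\infty}\sup_z\omega(z)^{-1}\int_{G\setminus zE_N}\|T_{(z,w)}\|\omega(w)\,dw=0$, and $\lim_{N\to\infty}\sup_w\omega(w)^{-1}\int_{G\setminus wE_N}\|T_{(z,w)}\|\omega(z)\,dz=0$. *)

(* Defs.v *)
From HB Require Import structures.
From mathcomp Require Import all_boot all_order all_algebra.
From mathcomp Require Import all_classical all_reals all_analysis.
From mathcomp Require Import complex.

Set Implicit Arguments.
Unset Strict Implicit.
Unset Printing Implicit Defensive.

Import Order.TTheory GRing.Theory Num.Theory.
Import numFieldNormedType.Exports.

Local Open Scope classical_set_scope.
Local Open Scope ring_scope.

(* A type carrying both a topology and a sigma-algebra (constrained to be the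
   Borel one in [lc_group] below). *)
HB.structure Definition TopMeasurable d := {T of Topological T & Measurable d T}.
Notation topMeasurableType d := (TopMeasurable.type d).

Section HilbertDefs.
Variable R : realType.
Local Notation C := (R[i]).

Section OneSpace.
Variables (V : lmodType C) (ip : V -> V -> C).

Definition inner_product :=
  [/\ (forall x y z, ip (x + y) z = ip x z + ip y z),
      (forall (a : C) x y, ip (a *: x) y = a * ip x y),
      (forall x y, ip y x = conjc (ip x y)),
      (forall x, 0 <= ip x x)
    & (forall x, ip x x = 0 -> x = 0)].

Definition hnorm (x : V) : R := Num.sqrt (complex.Re (ip x x)).

Definition hcomplete :=
  forall u : nat -> V,
    (forall e : R, 0 < e -> exists N, forall m n, (N <= m)%N -> (N <= n)%N ->
        hnorm (u m - u n) < e) ->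
    exists l, forall e : R, 0 < e -> exists N, forall n, (N <= n)%N ->
        hnorm (u n - l) < e.

Definition hseparable :=
  exists D : nat -> V, forall x (e : R), 0 < e -> exists n, hnorm (x - D n) < e.

Definition separable_hilbert := [/\ inner_product, hcomplete & hseparable].

Definition opnorm (A : V -> V) : \bar R :=
  ereal_sup [set (hnorm (A h))%:E | h in [set h | hnorm h <= 1]].
End OneSpace.

Definition bounded_linear (V W : lmodType C) (ipV : V -> V -> C) (ipW : W -> W -> C)
  (A : V -> W) :=
  (forall (a : C) x y, A (a *: x + y) = a *: A x + A y) /\
  exists K : R, forall x, hnorm ipW (A x) <= K * hnorm ipV x.

Definition hilbert_tensor (V1 V2 H : lmodType C) (ip1 : V1 -> V1 -> C)
  (ip2 : V2 -> V2 -> C) (ipH : H -> H -> C) (tens : V1 -> V2 -> H) :=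
  [/\ (forall a a' b, tens (a + a') b = tens a b + tens a' b),
      (forall (c : C) a b, tens (c *: a) b = c *: tens a b),
      (forall a b b', tens a (b + b') = tens a b + tens a b'),
      (forall (c : C) a b, tens a (c *: b) = c *: tens a b)
    & (forall a b a' b', ipH (tens a b) (tens a' b') = ip1 a a' * ip2 b b') /\
      (forall f (e : R), 0 < e -> exists n (a : 'I_n -> V1) (b : 'I_n -> V2),
          hnorm ipH (f - \sum_(i < n) tens (a i) (b i)) < e)].

(* pip f g = <f, g>_{H2} in H1 : the continuous (bounded linear) extension of
   a (x) b |-> <b, g>_{H2} a *)
Definition partial_pairing (V1 V2 H : lmodType C) (ip1 : V1 -> V1 -> C)
  (ip2 : V2 -> V2 -> C) (ipH : H -> H -> C) (tens : V1 -> V2 -> H)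
  (pip : H -> V2 -> V1) :=
  forall g, bounded_linear ipH ip1 (pip ^~ g) /\
            (forall a b, pip (tens a b) g = ip2 b g *: a).

Definition Tzw (V1 V2 H : lmodType C) (G : Type) (tens : V1 -> V2 -> H)
  (pip : H -> V2 -> V1) (psi : G -> V2) (T : H -> H) (z w : G) : V1 -> V1 :=
  fun h => pip (T (tens h (psi z))) (psi w).

Section Group.
Variables (d : measure_display) (G : topMeasurableType d).
Variables (mul : G -> G -> G) (inv : G -> G) (one : G).

Definition lc_group :=
  [/\ (forall x y z, mul x (mul y z) = mul (mul x y) z),
      (forall x, mul one x = x) /\ (forall x, mul (inv x) x = one),
      continuous (fun p : G * G => mul p.1 p.2) /\ continuous inv,
      hausdorff_space G /\ locally_compact [set: G]
    & (exists D : set G, countable D /\ dense D) /\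
      (@measurable d G = <<s open >>)].

Definition left_haar (mu : {measure set G -> \bar R}) :=
  [/\ (forall z A, measurable A -> mu (mul z @` A) = mu A),
      (forall K, compact K -> (mu K < +oo)%E),
      (forall U, open U -> U !=set0 -> (0 < mu U)%E),
      (forall A, measurable A ->
          mu A = ereal_inf [set mu U | U in [set U | open U /\ A `<=` U]])
    & (forall U, open U ->
          mu U = ereal_sup [set mu K | K in [set K | compact K /\ K `<=` U]])].

(* the exhausting sequence {E_N} (indexed from 0; the doubling property is
   required for N >= 1) *)
Definition exhaustion (E : nat -> set G) :=
  [/\ (forall N, open (E N) /\ compact (closure (E N))),
      (forall N, E N `<=` E N.+1),
      (forall N, inv @` E N = E N),
      (forall N, (0 < N)%N -> [set mul x y | x in E N & y in E N] `<=` E (2 * N)%N)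
    & \bigcup_N E N = [set: G]].

Definition parseval_frame (V2 : lmodType C) (ip2 : V2 -> V2 -> C)
  (mu : {measure set G -> \bar R}) (psi : G -> V2) :=
  [/\ (exists B : R, forall z, hnorm ip2 (psi z) <= B),
      (forall z (e : R), 0 < e -> \forall z' \near z, hnorm ip2 (psi z' - psi z) < e)
    & (forall f g,
        let F := fun z => ip2 f (psi z) * ip2 (psi z) g in
        [/\ mu.-integrable setT (fun z => (complex.Re (F z))%:E),
            mu.-integrable setT (fun z => (complex.Im (F z))%:E)
          & ip2 f g = (Rintegral mu setT (fun z => complex.Re (F z)))%:C%C
                      + 'i%C * (Rintegral mu setT (fun z => complex.Im (F z)))%:C%C])].

Definition partially_localized (V1 H : lmodType C) (ip1 : V1 -> V1 -> C)
  (ipH : H -> H -> C) (mu : {measure set G -> \bar R}) (E : nat -> set G)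
  (T : H -> H) (Tz : G -> G -> V1 -> V1) :=
  bounded_linear ipH ipH T /\
  exists omega : G -> R,
    [/\ continuous omega, (forall z, 0 < omega z)
      & (forall z w, omega (mul z w) <= omega z * omega w)] /\
    [/\ (ereal_sup [set (((omega z)^-1)%:E *
           \int[mu]_w (opnorm ip1 (Tz z w) * (omega w)%:E))%E | z in [set: G]] < +oo)%E,
        (ereal_sup [set (((omega w)^-1)%:E *
           \int[mu]_z (opnorm ip1 (Tz z w) * (omega z)%:E))%E | w in [set: G]] < +oo)%E,
        (fun N => ereal_sup [set (((omega z)^-1)%:E *
           \int[mu]_(w in ~` (mul z @` E N)) (opnorm ip1 (Tz z w) * (omega w)%:E))%E
             | z in [set: G]]) @ \oo --> 0%E
      & (fun N => ereal_sup [set (((omega w)^-1)%:E *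
           \int[mu]_(z in ~` (mul w @` E N)) (opnorm ip1 (Tz z w) * (omega z)%:E))%E
             | w in [set: G]]) @ \oo --> 0%E].

End Group.
End HilbertDefs.

(* Main.v *)
Require Import Defs.
From HB Require Import structures.
From mathcomp Require Import all_boot all_order all_algebra.
From mathcomp Require Import all_classical all_reals all_analysis.
From mathcomp Require Import complex.
From mathcomp Require Import measurable_realfun.
Import Order.TTheory GRing.Theory Num.Theory.
Import numFieldNormedType.Exports.
Local Open Scope classical_set_scope.
Local Open Scope ring_scope.
Set Implicit Arguments.
Unset Strict Implicit.

Lemma grp_mulV d (G : topMeasurableType d) (mul : G -> G -> G) inv one :
  lc_group mul inv one -> forall x, mul x (inv x) = one.
Proof.
case=> A [I V] _ _ _ x.
rewrite -[LHS]I -(V (inv x)) -A (A (inv x) x) V I //.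
Qed.

Lemma grp_mul1 d (G : topMeasurableType d) (mul : G -> G -> G) inv one :
  lc_group mul inv one -> forall x, mul x one = x.
Proof.
move=> g x; have := grp_mulV g x; case: g => A [I V] _ _ _ h.
by rewrite -(V x) A h I.
Qed.

Lemma grp_cont d (G : topMeasurableType d) (mul : G -> G -> G) inv one :
  lc_group mul inv one -> forall a, continuous (mul a).
Proof.
case=> _ _ [cm _] _ _ a x.
have -> : mul a = (fun p : G * G => mul p.1 p.2) \o (fun u => (a, u)) by [].
apply: continuous_comp; last exact: cm.
by apply: cvg_pair => /=; [exact: cvg_cst| exact: cvg_id].
Qed.

Lemma grp_meas d (G : topMeasurableType d) (mul : G -> G -> G) inv one :
  lc_group mul inv one -> forall (f : G -> G), continuous f -> measurable_fun setT f.
Proof.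
move=> g f cf; case: g => _ _ _ _ [_ mE].
apply: (measurability _ mE) => A [B oB <-].
rewrite setTI mE; apply: sub_sigma_algebra.
by move/continuousP: cf; apply.
Qed.

Lemma grp_measR d (G : topMeasurableType d) (mul : G -> G -> G) inv one (R : realType) :
  lc_group mul inv one -> forall (f : G -> R), continuous f -> measurable_fun setT f.
Proof.
move=> g f cf; case: g => _ _ _ _ [_ mE].
apply: (measurability _ (measurable_realfun.RGenOpens.measurableE R)) => A [B [a [b ->]] <-].
rewrite setTI mE; apply: sub_sigma_algebra.
by move/continuousP: cf; apply; exact: interval_open.
Qed.

Lemma grp_cont2 d (G : topMeasurableType d) (mul : G -> G -> G) inv one :
  lc_group mul inv one -> forall a, continuous (fun x => mul (inv x) a).
Proof.
case=> _ _ [cm ci] _ _ a x.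
have -> : (fun x => mul (inv x) a) = (fun p : G * G => mul p.1 p.2) \o (fun u => (inv u, a)) by [].
apply: continuous_comp; last exact: cm.
by apply: cvg_pair => /=; [exact: ci| exact: cvg_cst].
Qed.

Lemma le_int_nm d (T : measurableType d) (R : realType) (mu : {measure set T -> \bar R})
  D (f g : T -> \bar R) :
  (forall x, D x -> (0 <= f x)%E) -> (forall x, D x -> (f x <= g x)%E) ->
  (\int[mu]_(x in D) f x <= \int[mu]_(x in D) g x)%E.
Proof.
move=> f0 fg; rewrite !ge0_integralE //; last first.
  by move=> x Dx; apply: le_trans (fg x Dx); exact: f0.
apply: ereal_sup_le => _ [h hf <-]; exists h => //= x.
exact: le_trans (hf x) (lee_restrict fg x).
Qed.

Lemma grp_invmul d (G : topMeasurableType d) (mul : G -> G -> G) inv one :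
  lc_group mul inv one -> forall a x, mul (inv a) (mul a x) = x.
Proof. by case=> A [I V] _ _ _ a x; rewrite A V I. Qed.

Lemma grp_mulinv d (G : topMeasurableType d) (mul : G -> G -> G) inv one :
  lc_group mul inv one -> forall a x, mul a (mul (inv a) x) = x.
Proof.
move=> g a x; have := grp_mulV g a; case: g => A [I V] _ _ _ h.
by rewrite A h I.
Qed.

Lemma chvar d (G : topMeasurableType d) (mul : G -> G -> G) inv one (R : realType)
  (mu : {measure set G -> \bar R}) :
  lc_group mul inv one -> left_haar mul mu ->
  forall a (S : set G), measurable S -> forall (h : G -> \bar R),
  measurable_fun setT h -> (forall x, (0 <= h x)%E) ->
  (\int[mu]_(x in ~` (mul a @` S)) h x = \int[mu]_(u in ~` S) h (mul a u))%E.
Proof.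
move=> g [hinv _ _ _ _] a S mS h mh h0.
have mphi : measurable_fun setT (mul a) := grp_meas g (grp_cont (a:=a) g).
have mpsi : measurable_fun setT (mul (inv a)) := grp_meas g (grp_cont (a:=inv a) g).
have E1 : mul a @` S = mul (inv a) @^-1` S.
  apply/seteqP; split => [_ [s Ss <-]|y Sy] /=; first by rewrite (grp_invmul g).
  by exists (mul (inv a) y) => //; rewrite (grp_mulinv g).
have mD : measurable (~` (mul a @` S)).
  apply: measurableC; rewrite E1 -[_ @^-1` _]setTI; exact: mpsi.
have E2 : mul a @^-1` (~` (mul a @` S)) = ~` S.
  apply/seteqP; split => x /= Hx.
    by move=> Sx; apply: Hx; exists x.
  by move=> [s Ss] /(congr1 (mul (inv a))); rewrite !(grp_invmul g) // => sx; apply: Hx; rewrite -sx.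
rewrite (eq_measure_integral (pushforward mu (mul a))); last first.
  move=> A mA _; apply: esym; change (mu (mul a @^-1` A) = mu A).
  have -> : mul a @^-1` A = mul (inv a) @` A.
    apply/seteqP; split => [x /= Ax|_ [y Ay <-]] /=.
      by exists (mul a x) => //; rewrite (grp_invmul g).
    by rewrite (grp_mulinv g).
  by rewrite hinv.
rewrite ge0_integral_pushforward //; first by rewrite E2.
exact: measurable_funTS.
Qed.

Lemma bound d (G : topMeasurableType d) (mul : G -> G -> G) inv one (R : realType)
  (mu : {measure set G -> \bar R}) :
  lc_group mul inv one -> left_haar mul mu ->
  forall (c : R) a (S : set G), measurable S -> 0 < c ->
  forall (gi h : G -> \bar R) (k : G -> R),
  measurable_fun setT h -> measurable_fun setT k -> (forall x, 0 <= k x) ->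
  (forall x, (0 <= gi x)%E) -> (forall x, (gi x <= h x)%E) ->
  (forall u, (h (mul a u) <= (c * k u)%:E)%E) ->
  ((c^-1)%:E * \int[mu]_(x in ~` (mul a @` S)) gi x <= \int[mu]_(u in ~` S) (k u)%:E)%E.
Proof.
move=> g hm c a S mS c0 gi h k mh mk k0 gi0 gih hk.
have h0 x : (0 <= h x)%E by apply: le_trans (gih x).
have ci0 : (0 <= (c^-1)%:E)%E by rewrite lee_fin invr_ge0 ltW.
apply: (@le_trans _ _ ((c^-1)%:E * \int[mu]_(x in ~` (mul a @` S)) h x)%E).
  by apply: lee_wpmul2l => //; apply: le_int_nm.
rewrite (chvar g hm) //.
apply: (@le_trans _ _ ((c^-1)%:E * \int[mu]_(u in ~` S) ((c%:E) * (k u)%:E))%E).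
  by apply: lee_wpmul2l => //; apply: le_int_nm => // x _; rewrite EFinM.
rewrite ge0_integralZl_EFin //; last 3 first.
- by move=> x _; rewrite lee_fin.
- by apply/measurable_EFinP; exact: measurable_funTS.
- exact: ltW.
- by rewrite muleA -EFinM mulVf ?gt_eqF // mul1e.
- exact: measurableC.
Qed.

Lemma tail_cvg d (T : measurableType d) (R : realType) (mu : {measure set T -> \bar R})
  (E : nat -> set T) (k : T -> R) :
  (forall N, measurable (E N)) -> (forall N, E N `<=` E N.+1) -> \bigcup_N E N = setT ->
  measurable_fun setT k -> (forall x, 0 <= k x) ->
  mu.-integrable setT (fun x => (k x)%:E) ->
  (fun N => \int[mu]_(u in ~` E N) (k u)%:E)%E @ \oo --> 0%E.
Proof.
move=> mE incE UE mk k0 ik.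
have monoE : forall m n, (m <= n)%N -> E m `<=` E n.
  move=> m n /subnK <-; elim: (n - m)%N => // i IH x /IH.
  by rewrite addSn; apply: incE.
pose f_ := fun N => (fun x => (k x)%:E) \_ (~` E N).
have mf_ : forall N, measurable_fun setT (f_ N).
  move=> N; apply/(measurable_restrictT _ _).1; first exact: measurableC.
  by apply/measurable_EFinP; exact: measurable_funTS.
have fc : forall x, setT x -> f_ ^~ x @ \oo --> (cst 0%E) x.
  move=> x _; have : setT x by [].
  rewrite -UE => -[N _ ENx]; apply: cvg_near_cst.
  near=> n; rewrite /f_ /patch ifF //; apply/negbTE/negP; rewrite inE => /(_ (monoE N n _ x ENx)); apply.
  by near: n; exists N.
have fb : forall x n, setT x -> (`|f_ n x| <= (k x)%:E)%E.
  move=> x n _; rewrite /f_ /patch; case: ifP => _.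
    by rewrite gee0_abs // lee_fin.
  by rewrite abse0 lee_fin.
have [_ _ H] := @dominated_convergence _ _ _ mu setT measurableT f_ (cst 0%E)
  (fun x => (k x)%:E) (fun N => mf_ N) (measurable_cst _)
  (aeW _ fc) ik (aeW _ fb).
rewrite integral0 in H.
apply: cvg_trans H; apply: near_eq_cvg; apply: nearW => N /=.
by rewrite [RHS]integral_mkcond.
Unshelve. all: end_near.
Qed.

Lemma opnorm_ge0 (R : realType) (V : lmodType R[i]) (ip : V -> V -> R[i]) (A : V -> V) :
  inner_product ip -> (0 <= opnorm ip A)%E.
Proof.
case=> hadd _ _ _ _.
have ip00 : ip 0 0 = 0.
  have := hadd 0 0 0; rewrite addr0 => /esym/eqP; rewrite -subr_eq0 addrK => /eqP.
  by [].
apply: le_ereal_sup_tmp; exists (hnorm ip (A 0))%:E.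
  exists 0 => //; rewrite /= /hnorm ip00 /= sqrtr0 //.
by rewrite lee_fin /hnorm sqrtr_ge0.
Qed.

Lemma grp_invprod d (G : topMeasurableType d) (mul : G -> G -> G) inv one :
  lc_group mul inv one -> forall w u, mul (inv (mul w u)) w = inv u.
Proof.
move=> g w u.
have h1 : mul (mul (inv (mul w u)) w) u = one.
  by case: g => A [I V] _ _ _; rewrite -A V.
rewrite -[LHS](grp_mul1 g) -(grp_mulV g u).
case: g h1 => A [I V] _ _ _ h1.
by rewrite A h1 I.
Qed.

Unset Implicit Arguments.
Set Strict Implicit.

Theorem lemma4p2 (R : realType) (V1 V2 H : lmodType R[i])
  (ip1 : V1 -> V1 -> R[i]) (ip2 : V2 -> V2 -> R[i]) (ipH : H -> H -> R[i])
  (tens : V1 -> V2 -> H) (pip : H -> V2 -> V1)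
  (d : measure_display) (G : topMeasurableType d)
  (mul : G -> G -> G) (inv : G -> G) (one : G)
  (mu : {measure set G -> \bar R}) (E : nat -> set G) (psi : G -> V2)
  (T : H -> H) (L : G -> R) (omega : G -> R) :
  separable_hilbert ip1 -> separable_hilbert ip2 -> separable_hilbert ipH ->
  hilbert_tensor ip1 ip2 ipH tens -> partial_pairing ip1 ip2 ipH tens pip ->
  lc_group mul inv one -> left_haar mul mu -> exhaustion mul inv E ->
  parseval_frame ip2 mu psi ->
  bounded_linear ipH ipH T ->
  measurable_fun [set: G] L -> (forall z, 0 <= L z) -> (forall z, L (inv z) = L z) ->
  continuous omega -> (forall z, 0 < omega z) ->
  (forall z w, omega (mul z w) <= omega z * omega w) ->
  mu.-integrable [set: G] (fun z => (L z * omega z)%:E) ->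
  (forall z w, (opnorm ip1 (Tzw tens pip psi T z w) <= (L (mul (inv z) w))%:E)%E) ->
  partially_localized mul ip1 ipH mu E T (Tzw tens pip psi T).
Proof.
move=> [hip1 _ _] _ _ _ _ g hm hE _ bT mL L0 Linv cw w0 wM iL hT.
have mw : measurable_fun setT omega := grp_measR g cw.
have [_ _ _ _ [_ mE]] := g.
have [hE1 hE2 _ _ hE5] := hE.
have mEN : forall N, measurable (E N).
  by move=> N; rewrite mE; apply: sub_sigma_algebra; exact: (hE1 N).1.
pose k u := L u * omega u.
have mk : measurable_fun setT k by exact: measurable_funM.
have k0 : forall u, 0 <= k u by move=> u; rewrite mulr_ge0 // ltW.
have opn0 : forall z w, (0 <= opnorm ip1 (Tzw tens pip psi T z w))%E.
  by move=> z w; exact: opnorm_ge0.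
have mh : forall (f : G -> G), continuous f ->
    measurable_fun setT (fun x => (L (f x) * omega x)%:E).
  move=> f cf; apply/measurable_EFinP; apply: measurable_funM => //.
  apply: measurableT_comp => //. exact: (@grp_meas _ _ _ _ _ g f cf).
have partA : forall a S, measurable S ->
   ((omega a)^-1%:E * \int[mu]_(x in ~` (mul a @` S))
       (opnorm ip1 (Tzw tens pip psi T a x) * (omega x)%:E)
     <= \int[mu]_(u in ~` S) (k u)%:E)%E.
  move=> a S mS.
  apply: (bound g hm mS (w0 a) (h := fun x => (L (mul (inv a) x) * omega x)%:E)).
  - exact: mh (grp_cont (a := inv a) g).
  - exact: mk.
  - exact: k0.
  - by move=> x; apply: mule_ge0 => //; rewrite lee_fin ltW.
  - by move=> x; rewrite EFinM; apply: lee_wpmul2r => //; rewrite lee_fin ltW.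
  - move=> u; rewrite lee_fin (grp_invmul g) /k.
    by rewrite mulrCA; apply: ler_wpM2l => //.
have partB : forall a S, measurable S ->
   ((omega a)^-1%:E * \int[mu]_(x in ~` (mul a @` S))
       (opnorm ip1 (Tzw tens pip psi T x a) * (omega x)%:E)
     <= \int[mu]_(u in ~` S) (k u)%:E)%E.
  move=> a S mS.
  apply: (bound g hm mS (w0 a) (h := fun x => (L (mul (inv x) a) * omega x)%:E)).
  - exact: mh (grp_cont2 (a := a) g).
  - exact: mk.
  - exact: k0.
  - by move=> x; apply: mule_ge0 => //; rewrite lee_fin ltW.
  - by move=> x; rewrite EFinM; apply: lee_wpmul2r => //; rewrite lee_fin ltW.
  - move=> u; rewrite lee_fin (grp_invprod g) Linv /k.
    by rewrite mulrCA; apply: ler_wpM2l => //.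
have set0E : forall a, ~` (mul a @` set0) = [set: G].
  by move=> a; rewrite image_set0 setC0.
have ik : (\int[mu]_u (k u)%:E < +oo)%E.
  move/integrableP: iL => [_]; apply: le_lt_trans.
  apply: le_int_nm => x _; first by rewrite lee_fin k0.
  by rewrite gee0_abs ?lee_fin ?k0.

have cN := tail_cvg mEN hE2 hE5 mk k0 iL.
split => //; exists omega; split; first by split.
split.
- apply: le_lt_trans ik; apply/ge_ereal_sup => _ [z _ <-].
  by have := partA z set0 measurable0; rewrite set0E setC0.
- apply: le_lt_trans ik; apply/ge_ereal_sup => _ [z _ <-].
  by have := partB z set0 measurable0; rewrite set0E setC0.
- apply: (squeeze_cvge (f := cst 0%E)) (cvg_cst _) cN.
  apply: nearW => N /=; apply/andP; split.
    apply: le_ereal_sup_tmp; exists ((omega one)^-1%:E * \int[mu]_(w in ~` (mul one @` E N))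
       (opnorm ip1 (Tzw tens pip psi T one w) * (omega w)%:E))%E; first by exists one.
    apply: mule_ge0; first by rewrite lee_fin invr_ge0 ltW.
    by apply: integral_ge0 => x _; apply: mule_ge0 => //; rewrite lee_fin ltW.
  by apply/ge_ereal_sup => _ [z _ <-]; apply: partA.
- apply: (squeeze_cvge (f := cst 0%E)) (cvg_cst _) cN.
  apply: nearW => N /=; apply/andP; split.
    apply: le_ereal_sup_tmp; exists ((omega one)^-1%:E * \int[mu]_(w in ~` (mul one @` E N))
       (opnorm ip1 (Tzw tens pip psi T w one) * (omega w)%:E))%E; first by exists one.
    apply: mule_ge0; first by rewrite lee_fin invr_ge0 ltW.
    by apply: integral_ge0 => x _; apply: mule_ge0 => //; rewrite lee_fin ltW.
  by apply/ge_ereal_sup => _ [z _ <-]; apply: partB.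
Qed.
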